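(* Let $\mathcal{A}=\mathbb{C}\setminus(-\infty,0]$ and let $H$ be the principal branch on $\mathcal{A}$ given by $H(z)=\ln\frac{z(1+z)}{1+z^2}\big/\ln\frac{1+z^2}{1+z}$ for $z\ne1$ and $H(1)=1$ (principal logarithm, $-\pi<\arg<\pi$). For $z=re^{i\theta}\in\mathcal{A}$, the function $zH(z)$ tends to $0$ as $r\to\infty$, uniformly in $\theta$.
   Context: $H$ is the holomorphic extension to $\mathcal{A}$ of $H(x)=\frac{\ln x}{\ln(x^2+1)-\ln(x+1)}-1$, $x\in(0,\infty)$. *)

(* Defs.v *)
From Stdlib Require Import Reals.
From Coquelicot Require Import Coquelicot.
Open Scope R_scope.

(* Principal argument, values in (-PI, PI] (PI on the closed negative real
   axis, including 0, where it is irrelevant for the principal branch with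
   -PI < arg < PI).  For w off (-oo,0], Arg w = 2 atan (Im w / (|w| + Re w)),
   the standard half-angle formula. *)
Definition Arg (w : C) : R :=
  if Req_EM_T (Cmod w + fst w) 0 then PI
  else 2 * atan (snd w / (Cmod w + fst w)).

Definition Clog (w : C) : C := (ln (Cmod w), Arg w).

Definition H (z : C) : C :=
  if Ceq_dec z (RtoC 1) then RtoC 1
  else Cdiv (Clog (Cdiv (Cmult z (Cplus (RtoC 1) z))
                        (Cplus (RtoC 1) (Cmult z z))))
            (Clog (Cdiv (Cplus (RtoC 1) (Cmult z z)) (Cplus (RtoC 1) z))).

Definition polar (r theta : R) : C := (r * cos theta, r * sin theta).

(* Main.v *)
Require Import Defs.
From Stdlib Require Import Reals Lra.
From Coquelicot Require Import Coquelicot.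
Open Scope R_scope.

Lemma ln_bound x : / 2 <= x -> Rabs (ln x) <= 2 * Rabs (x - 1).
Proof.
  intros Hx.
  assert (H1 : ln x <= x - 1).
  { pose proof (exp_ineq1_le (ln x)). rewrite exp_ln in H; lra. }
  assert (H2 : ln (/ x) <= / x - 1).
  { pose proof (exp_ineq1_le (ln (/x))). rewrite exp_ln in H.
    lra. apply Rinv_0_lt_compat; lra. }
  rewrite ln_Rinv in H2 by lra.
  assert (H3 : x <= 1 -> / x - 1 <= 2 * (1 - x)).
  { intro. assert (/ x * x = 1) by (field; lra).
    assert (0 < / x) by (apply Rinv_0_lt_compat; lra).
    assert ((2*x-1)*(x-1) <= 0) by nra.
    destruct (Rle_dec (/x - 1) (2*(1-x))); auto.
    assert (x * (/x - 1 - 2*(1-x)) > 0) by (apply Rmult_lt_0_compat; lra). nra. }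
  destruct (Rle_dec x 1); [specialize (H3 r)|
    assert (/x < 1) by (rewrite <- Rinv_1; apply Rinv_lt_contravar; lra)]; unfold Rabs; repeat destruct Rcase_abs; lra.
Qed.

Lemma atan_lt2 x : 0 < x -> atan x < 2 * x.
Proof.
  intros Hx.
  assert (H : 2 * 0 - atan 0 < 2 * x - atan x).
  { apply (incr_function (fun t => 2 * t - atan t) m_infty p_infty
      (fun t => 2 * 1 - / (1 + t ^ 2))); try exact I; try exact Hx.
    - intros t _ _. apply is_derive_Reals.
      apply (derivable_pt_lim_minus (fun t => 2 * t) atan).
      + apply (derivable_pt_lim_scal (fun t => t)). apply derivable_pt_lim_id.
      + apply derivable_pt_lim_atan.
    - intros t _ _. assert (1 <= 1 + t ^ 2) by nra.
      assert (/ (1 + t ^ 2) <= 1).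
      { rewrite <- Rinv_1. apply Rinv_le_contravar; lra. }
      lra. }
  rewrite atan_0 in H. lra.
Qed.

Lemma atan_abs x : Rabs (atan x) <= 2 * Rabs x.
Proof.
  destruct (Rtotal_order x 0) as [Hn|[H0|Hp]].
  - pose proof (atan_lt2 (-x)). rewrite atan_opp in H.
    assert (atan x < 0). { rewrite <- atan_0. apply atan_increasing; lra. }
    rewrite !Rabs_left; lra.
  - subst. rewrite atan_0, Rabs_R0. lra.
  - pose proof (atan_lt2 x Hp).
    assert (0 < atan x). { rewrite <- atan_0. apply atan_increasing; lra. }
    rewrite !Rabs_pos_eq; lra.
Qed.

Lemma sqrt2_le2 : sqrt 2 <= 2.
Proof.
  rewrite <- (sqrt_square 2) at 2 by lra. apply sqrt_le_1_alt. lra.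
Qed.

Lemma clog_small w : Cmod (Cminus w 1) <= / 2 ->
  Cmod (Clog w) <= 8 * Cmod (Cminus w 1).
Proof.
  destruct w as [a b]. intros Hd.
  set (d := Cmod (Cminus (a, b) 1)) in *.
  pose proof (Rmax_Cmod (Cminus (a, b) 1)) as Hm.
  change (Rmax (Rabs (a - 1)) (Rabs (b - 0)) <= d) in Hm.
  rewrite Rminus_0_r in Hm.
  assert (Ha : Rabs (a - 1) <= d) by (eapply Rle_trans; [apply Rmax_l|exact Hm]).
  assert (Hb : Rabs b <= d) by (eapply Rle_trans; [apply Rmax_r|exact Hm]).
  assert (Hw1 : Cmod (a, b) <= d + 1).
  { replace (a, b) with (Cplus (Cminus (a, b) 1) 1) at 1.
    eapply Rle_trans; [apply Cmod_triangle|]. rewrite Cmod_1. unfold d; lra.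
    apply injective_projections; simpl; ring. }
  assert (Hw2 : 1 - d <= Cmod (a, b)).
  { assert (Cmod (RtoC 1) <= Cmod (Cminus 1 (a, b)) + Cmod (a, b)).
    { replace (RtoC 1) with (Cplus (Cminus 1 (a, b)) (a, b)) at 1.
      apply Cmod_triangle. apply injective_projections; simpl; ring. }
    rewrite Cmod_1 in H.
    replace (Cminus 1 (a, b)) with (Copp (Cminus (a, b) 1)) in H.
    rewrite Cmod_opp in H. unfold d; lra.
    apply injective_projections; simpl; ring. }
  assert (Hln : Rabs (ln (Cmod (a, b))) <= 2 * d).
  { eapply Rle_trans. apply ln_bound. lra.
    unfold Rabs; destruct Rcase_abs; lra. }
  assert (Ha' : 1 - d <= a) by (unfold Rabs in Ha; destruct Rcase_abs in Ha; lra).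
  assert (Hc : 1 <= Cmod (a, b) + a) by lra.
  assert (Harg : Rabs (Arg (a, b)) <= 4 * d).
  { unfold Arg. simpl fst; simpl snd.
    destruct (Req_EM_T (Cmod (a, b) + a) 0) as [E|E]. lra.
    rewrite Rabs_mult, (Rabs_pos_eq 2) by lra.
    assert (Rabs (atan (b / (Cmod (a, b) + a))) <= 2 * d).
    { eapply Rle_trans. apply atan_abs.
      unfold Rdiv. rewrite Rabs_mult, Rabs_inv, (Rabs_pos_eq (_ + _)) by lra.
      assert (/ (Cmod (a, b) + a) <= 1).
      { rewrite <- Rinv_1. apply Rinv_le_contravar; lra. }
      assert (0 < / (Cmod (a, b) + a)) by (apply Rinv_0_lt_compat; lra).
      pose proof (Rabs_pos b). nra. }
    lra. }
  eapply Rle_trans. apply Cmod_2Rmax.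
  unfold Clog; simpl fst; simpl snd.
  assert (Rmax (Rabs (ln (Cmod (a, b)))) (Rabs (Arg (a, b))) <= 4 * d).
  { apply Rmax_lub; lra. }
  pose proof sqrt2_le2. pose proof (sqrt_pos 2).
  pose proof (Rmax_l (Rabs (ln (Cmod (a, b)))) (Rabs (Arg (a, b)))).
  pose proof (Rabs_pos (ln (Cmod (a, b)))). nra.
Qed.

Lemma clog_large w : 1 < Cmod w -> ln (Cmod w) <= Cmod (Clog w).
Proof.
  intros Hw. pose proof (re_le_Cmod (Clog w)) as H. unfold Clog in *; simpl in H.
  eapply Rle_trans; [apply Rle_abs|exact H].
Qed.

Lemma main_z z : 3 <= Cmod z -> Cmod (Cmult z (H z)) <= 16 / ln (Cmod z - 1).
Proof.
  intros Hr. set (r := Cmod z) in *.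
  assert (Hzz : Cmod (Cmult z z) = r * r) by (rewrite Cmod_mult; reflexivity).
  assert (Hd1 : r * r - 1 <= Cmod (Cplus 1 (Cmult z z))).
  { assert (T : Cmod (Cmult z z) <= Cmod (Cplus 1 (Cmult z z)) + Cmod (Copp 1)).
    { replace (Cmult z z) with (Cplus (Cplus 1 (Cmult z z)) (Copp 1)) at 1.
      apply Cmod_triangle. apply injective_projections; simpl; ring. }
    rewrite Cmod_opp, Cmod_1 in T. lra. }
  assert (Hd2 : r - 1 <= Cmod (Cplus 1 z)).
  { assert (T : Cmod z <= Cmod (Cplus 1 z) + Cmod (Copp 1)).
    { replace z with (Cplus (Cplus 1 z) (Copp 1)) at 1.
      apply Cmod_triangle. apply injective_projections; simpl; ring. }
    rewrite Cmod_opp, Cmod_1 in T. unfold r; lra. }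
  assert (Hd3 : Cmod (Cplus 1 z) <= r + 1).
  { eapply Rle_trans. apply Cmod_triangle. rewrite Cmod_1. unfold r; lra. }
  assert (Hd4 : Cmod (Cminus z 1) <= r + 1).
  { unfold Cminus. eapply Rle_trans. apply Cmod_triangle.
    rewrite Cmod_opp, Cmod_1. unfold r; lra. }
  assert (N1 : Cplus 1 (Cmult z z) <> 0).
  { intro E. rewrite E, Cmod_0 in Hd1. nra. }
  assert (N2 : Cplus 1 z <> 0).
  { intro E. rewrite E, Cmod_0 in Hd2. lra. }
  set (w1 := Cdiv (Cmult z (Cplus 1 z)) (Cplus 1 (Cmult z z))).
  set (w2 := Cdiv (Cplus 1 (Cmult z z)) (Cplus 1 z)).
  assert (E1 : Cminus w1 1 = Cdiv (Cminus z 1) (Cplus 1 (Cmult z z))).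
  { unfold w1. field. exact N1. }
  assert (B1 : Cmod (Cminus w1 1) <= / (r - 1)).
  { rewrite E1, Cmod_div by exact N1.
    apply (Rle_trans _ ((r + 1) / (r * r - 1))).
    - unfold Rdiv. apply Rmult_le_compat;
      [apply Cmod_ge_0 | left; apply Rinv_0_lt_compat; nra | exact Hd4 |
       apply Rinv_le_contravar; nra].
    - right. field. repeat split; nra. }
  assert (B1' : / (r - 1) <= / 2).
  { apply Rinv_le_contravar; lra. }
  assert (L1 : Cmod (Clog w1) <= 8 / (r - 1)).
  { eapply Rle_trans. apply clog_small. lra. unfold Rdiv; lra. }
  assert (B2 : r - 1 <= Cmod w2).
  { unfold w2. rewrite Cmod_div by exact N2.
    apply (Rle_trans _ ((r * r - 1) / (r + 1))).
    - right. field. lra.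
    - unfold Rdiv. apply Rmult_le_compat;
      [nra | left; apply Rinv_0_lt_compat; lra | lra |
       apply Rinv_le_contravar; lra]. }
  assert (Lpos : ln 2 <= ln (r - 1)).
  { destruct (Req_dec (r - 1) 2) as [E|E]. rewrite E; lra.
    left; apply ln_increasing; lra. }
  pose proof ln_lt_2 as Hln2.
  assert (L2 : ln (r - 1) <= Cmod (Clog w2)).
  { eapply Rle_trans; [|apply clog_large; lra].
    destruct (Req_dec (r - 1) (Cmod w2)) as [E|E]. rewrite E; lra.
    left; apply ln_increasing; lra. }
  assert (N3 : Clog w2 <> 0).
  { intro E. rewrite E, Cmod_0 in L2. lra. }
  assert (Hz1 : z <> 1).
  { intro E. unfold r in Hr. rewrite E, Cmod_1 in Hr. lra. }
  unfold Defs.H. destruct (Ceq_dec z 1) as [E|_]. contradiction.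
  fold w1 w2.
  rewrite Cmod_mult, Cmod_div by exact N3. fold r.
  assert (rA : r * Cmod (Clog w1) <= 16).
  { apply (Rle_trans _ (r * (8 / (r - 1)))).
    apply Rmult_le_compat_l; lra.
    apply (Rmult_le_reg_r (r - 1)). lra.
    unfold Rdiv. rewrite Rmult_assoc, Rmult_assoc, Rinv_l by lra. nra. }
  assert (0 <= Cmod (Clog w1)) by apply Cmod_ge_0.
  unfold Rdiv. rewrite <- Rmult_assoc.
  apply Rmult_le_compat; try lra.
  apply Rmult_le_pos; lra.
  left; apply Rinv_0_lt_compat; lra.
  apply Rinv_le_contravar; lra.
Qed.

Lemma Cmod_polar r t : 0 <= r -> Cmod (polar r t) = r.
Proof.
  intros Hr. unfold Cmod, polar. simpl fst; simpl snd.
  replace ((r * cos t) ^ 2 + (r * sin t) ^ 2) with (r ^ 2).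
  apply sqrt_pow2; lra.
  pose proof (sin2_cos2 t). unfold Rsqr in *. nra.
Qed.

Theorem lemma4p2 :
  forall eps : R, 0 < eps ->
  exists R0 : R, forall r theta : R,
    R0 < r -> -PI < theta < PI ->
    Cmod (Cmult (polar r theta) (H (polar r theta))) < eps.
Proof.
  intros eps He. exists (3 + exp (16 / eps)). intros r t Hr _.
  pose proof (exp_pos (16 / eps)).
  assert (Hm : Cmod (polar r t) = r) by (apply Cmod_polar; lra).
  eapply Rle_lt_trans. apply main_z. lra. rewrite Hm.
  assert (Hl : 16 / eps < ln (r - 1)).
  { rewrite <- (ln_exp (16 / eps)). apply ln_increasing; lra. }
  assert (0 < 16 / eps) by (unfold Rdiv; apply Rmult_lt_0_compat; [lra|apply Rinv_0_lt_compat; lra]).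
  apply (Rmult_lt_reg_r (ln (r - 1))). lra.
  unfold Rdiv at 1. rewrite Rmult_assoc, Rinv_l by lra.
  apply (Rmult_lt_reg_r (/ eps)). apply Rinv_0_lt_compat; lra.
  replace (eps * ln (r - 1) * / eps) with (ln (r - 1)) by (field; lra).
  unfold Rdiv in Hl. lra.
Qed.
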